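(* Let $n\ge1$. Identify each $n$-element subset of $\langle n\rangle$ with a partition inside the $n\times n$ square (as described in the context), so that meet $\wedge$ and join $\vee$ correspond to intersection and union of diagrams and $\alpha^t$ is the transpose. Define $\pi_n(\gamma):=(\gamma\wedge\gamma^t,\gamma\vee\gamma^t)$ for $\gamma\in\binom{\langle n\rangle}{n}$, and let $(\alpha,\beta)$ be in the image of $\pi_n$ (so $\alpha\subseteq\beta$ are symmetric partitions). Let $\Pi_+(\alpha,\beta)$ be the set of boxes of $\beta\setminus\alpha$ lying strictly above the main diagonal, and let $S_1,\dots,S_k$ be its connected components (two boxes being adjacent when they share an edge). For $I\subseteq[k]$ put $\gamma_I:=\alpha\cup\bigl(\bigcup_{i\notin I}S_i^t\bigr)\cup\bigl(\bigcup_{i\in I}S_i\bigr)$, where $S^t$ denotes the reflection of a set of boxes in the main diagonal. Then $I\mapsto\gamma_I$ is a bijection from the set of subsets of $[k]$ (i.e. subsets of the set of connected components of $\Pi_+(\alpha,\beta)$) onto the fiber $\pi_n^{-1}(\alpha,\beta)$. There is a unique Northeast element of $\pi_n^{-1}(\alpha,\beta)$, namely $\gamma_{[k]}$, and a unique Southwest element, namely $\gamma_{\emptyset}$.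
   Context: $\langle n\rangle=\{\bar n<\dots<\bar1<1<\dots<n\}$ with $\bar\imath=-i$. An $n$-element subset $\alpha\subseteq\langle n\rangle$ corresponds to a partition in the $n\times n$ square: take the lattice path from the lower-left to the upper-right corner whose $j$-th unit step is upward if the $j$-th smallest element of $\langle n\rangle$ lies in $\alpha$ and rightward otherwise; the partition consists of the boxes between the path and the top and left edges. Boxes are indexed $(r,c)$ (row from top, column from left); box $(r,c)$ is above the main diagonal if $c>r$. The transpose $\alpha^t$ is the reflection of the diagram in the main diagonal (as a set, $\alpha^t=\langle n\rangle\setminus\{\bar\alpha_1,\dots,\bar\alpha_n\}$). A partition $\lambda$ in the square is Northeast if $\lambda_-^t\subseteq\lambda_+$, where $\lambda_+$ (resp. $\lambda_-$) is the set of boxes of $\lambda$ on or above (resp. on or below) the main diagonal, i.e. if for every box $(r,c)\in\lambda$ with $r>c$ the box $(c,r)$ lies in $\lambda$; $\lambda$ is Southwest if $\lambda^t$ is Northeast. *)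

(* Defs.v *)
From mathcomp Require Import all_boot.
Set Implicit Arguments. Unset Strict Implicit. Unset Printing Implicit Defensive.

(* <n> = {nbar < ... < 1bar < 1 < ... < n} is encoded by positions 'I_(2n):
   position j (0-indexed) is the (j+1)-th smallest element of <n>.
   An n-element subset of <n> is a set A : {set 'I_(2n)} with #|A| = n. *)

(* Boxes of the n x n square: (r, c), row from top, column from left, 0-indexed. *)
Definition box (n : nat) := ('I_n * 'I_n)%type.

(* The partition (Young diagram) of a subset A of <n>: the lattice path from the
   lower-left corner takes, at its j-th step, an up step iff position j is in A.
   After m steps the path is at (m - u_m, u_m) with u_m = #{j in A | j < m}.
   Box (r,c) has lower-right corner (c+1, n-r-1) and lies between the path and
   the top/left edges iff u_(n-r+c) <= n-r-1. *)
Definition diag (n : nat) (A : {set 'I_(2 * n)}) : {set box n} :=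
  [set b : box n | #|[set j in A | (j < n - b.1 + b.2)%N]| < n - b.1].

Definition tr (n : nat) (S : {set box n}) : {set box n} :=
  [set ((b.2, b.1) : box n) | b in S].

Definition pi_n (n : nat) (g : {set 'I_(2 * n)}) : {set box n} * {set box n} :=
  (diag g :&: tr (diag g), diag g :|: tr (diag g)).

Definition fiber (n : nat) (a b : {set box n}) : {set {set 'I_(2 * n)}} :=
  [set g : {set 'I_(2 * n)} | (#|g| == n) && (pi_n g == (a, b))].

Definition Pi_plus (n : nat) (a b : {set box n}) : {set box n} :=
  [set x in b :\: a | (x.1 < x.2)%N].

Definition adjb (n : nat) (x y : box n) : bool :=
  ((x.1 == y.1) && ((x.2.+1 == y.2) || (y.2.+1 == x.2)))
  || ((x.2 == y.2) && ((x.1.+1 == y.1) || (y.1.+1 == x.1))).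

Definition adj_in (n : nat) (S : {set box n}) : rel (box n) :=
  fun x y => [&& x \in S, y \in S & adjb x y].

Definition components (n : nat) (S : {set box n}) : {set {set box n}} :=
  [set [set y | connect (adj_in S) x y] | x in S].

Definition gammaI (n : nat) (a b : {set box n}) (I : {set {set box n}})
  : {set box n} :=
  a :|: (\bigcup_(S in components (Pi_plus a b) :\: I) tr S)
    :|: (\bigcup_(S in I) S).

Definition Northeast (n : nat) (l : {set box n}) : bool :=
  [forall r : 'I_n, forall c : 'I_n,
     [&& (r, c) \in l & (c < r)%N] ==> ((c, r) \in l)].

Definition Southwest (n : nat) (l : {set box n}) : bool := Northeast (tr l).

(* Main.v *)
Require Import Defs.
From mathcomp Require Import all_boot.
From mathcomp Require Import zify.
Set Implicit Arguments. Unset Strict Implicit. Unset Printing Implicit Defensive.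

Lemma card_lt N k : (k <= N)%N -> #|[set j : 'I_N | (j < k)%N]| = k.
Proof.
move=> kN.
have -> : [set j : 'I_N | (j < k)%N] = widen_ord kN @: [set: 'I_k].
  apply/setP=> j; rewrite inE; apply/idP/imsetP.
    by move=> jk; exists (Ordinal jk) => //; apply/val_inj.
  by case=> i _ ->; rewrite /= ltn_ord.
rewrite card_imset ?cardsT ?card_ord //.
by move=> i i' /(congr1 val) /= E; apply/val_inj.
Qed.

Definition u n (A : {set 'I_(2 * n)}) (m : nat) := #|[set j in A | (j < m)%N]|.

Lemma u_mono n (A : {set 'I_(2 * n)}) m m' : (m <= m')%N -> (u A m <= u A m')%N.
Proof.
move=> le; apply: subset_leq_card; apply/subsetP=> j; rewrite !inE => /andP[-> /leq_trans]; exact.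
Qed.

Lemma u_succ n (A : {set 'I_(2 * n)}) (j : 'I_(2 * n)) : u A j.+1 = u A j + (j \in A).
Proof.
rewrite /u; case: (boolP (j \in A)) => jA.
  have -> : [set j0 in A | (j0 < j.+1)%N] = j |: [set j0 in A | (j0 < j)%N].
    apply/setP=> k; rewrite !inE ltnS leq_eqVlt.
    case: (eqVneq k j) => [->|ne]; first by rewrite jA eqxx.
    have -> : (nat_of_ord k == nat_of_ord j) = false by apply/negbTE; move: ne; apply: contra => /eqP E; apply/eqP/val_inj.
    by [].
  by rewrite cardsU1 !inE ltnn andbF addn1 add1n.
rewrite addn0; apply: eq_card => k; rewrite !inE ltnS leq_eqVlt.
case: (eqVneq k j) => [->|ne]; first by rewrite (negbTE jA).
have -> : (nat_of_ord k == nat_of_ord j) = false by apply/negbTE; move: ne; apply: contra => /eqP E; apply/eqP/val_inj.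
by [].
Qed.

Lemma u_step n (A : {set 'I_(2 * n)}) m : (u A m.+1 <= (u A m).+1)%N.
Proof.
case: (ltnP m (2 * n)) => mlt.
  by rewrite (u_succ A (Ordinal mlt)) /=; case: (_ \in _); rewrite ?addn1 ?addn0.
have -> : u A m.+1 = u A m; last by [].
rewrite /u; apply: eq_card => k; rewrite !inE.
have k1 := ltn_ord k.
have -> : (k < m.+1)%N = true by apply/idP; lia.
have -> : (k < m)%N = true by apply/idP; lia.
by [].
Qed.

Lemma u_le_m n (A : {set 'I_(2 * n)}) m : (m <= 2 * n)%N -> (u A m <= m)%N.
Proof.
move=> mle; rewrite -{2}(card_lt mle); apply: subset_leq_card; apply/subsetP=> j; rewrite !inE => /andP[].
by [].
Qed.

Lemma u_le_card n (A : {set 'I_(2 * n)}) m : (u A m <= #|A|)%N.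
Proof. by apply: subset_leq_card; apply/subsetP=> j; rewrite !inE => /andP[]. Qed.

Lemma u_lower n (A : {set 'I_(2 * n)}) m : #|A| = n -> (m <= 2 * n)%N -> (m <= u A m + n)%N.
Proof.
move=> cA mle.
have E := cardsID A [set j : 'I_(2 * n) | (j < m)%N]; rewrite card_lt // in E.
have E2 : [set j : 'I_(2*n) | (j < m)%N] :&: A = [set j in A | (j < m)%N].
  by apply/setP=> j; rewrite !inE andbC.
rewrite E2 in E.
have cC := cardsC A; rewrite card_ord cA in cC.
have : (#|[set j : 'I_(2*n) | (j < m)%N] :\: A| <= #|~: A|)%N.
  by apply: subset_leq_card; apply/subsetP=> j; rewrite !inE => /andP[].
rewrite /u => h; move: E h cC; set x := #|[set j in A | _]|; set y := #|_ :\: A|; set z := #|~: A|; lia.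
Qed.

Definition dc n (D : {set box n}) := forall x y : box n,
  x \in D -> (y.1 <= x.1)%N -> (y.2 <= x.2)%N -> y \in D.

Lemma step_dc n (D : {set box n}) :
  (forall x y : box n, x \in D -> (y.1 <= x.1)%N -> (y.2 <= x.2)%N ->
     (y.1 + y.2).+1 = x.1 + x.2 -> y \in D) -> dc D.
Proof.
move=> st.
suff H : forall k (x y : box n), x.1 + x.2 = y.1 + y.2 + k -> x \in D ->
    (y.1 <= x.1)%N -> (y.2 <= x.2)%N -> y \in D.
  by move=> x y xD h1 h2; apply: (H (x.1 + x.2 - (y.1 + y.2)) x) => //; lia.
elim=> [|k IH] [x1 x2] [y1 y2] /= E xD h1 h2.
  have -> : (y1, y2) = (x1, x2) by congr pair; apply/val_inj => /=; lia.
  by [].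
case: (ltnP y1 x1) => lt1.
  have lx : (x1.-1 < n)%N by apply: leq_ltn_trans (leq_pred x1) (ltn_ord x1).
  apply: (IH (Ordinal lx, x2)) => /=; try lia.
  apply: (st (x1, x2)) => //=; lia.
have lx : (x2.-1 < n)%N by apply: leq_ltn_trans (leq_pred x2) (ltn_ord x2).
apply: (IH (x1, Ordinal lx)) => /=; try lia.
apply: (st (x1, x2)) => //=; lia.
Qed.

Lemma mem_diag n (A : {set 'I_(2 * n)}) (b : box n) :
  (b \in diag A) = (u A (n - b.1 + b.2) < n - b.1)%N.
Proof. by rewrite inE. Qed.

Lemma diag_dc n (A : {set 'I_(2 * n)}) : dc (diag A).
Proof.
apply: step_dc => -[x1 x2] [y1 y2]; rewrite !mem_diag /= => xD h1 h2 E.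
have ox1 := ltn_ord x1; have oy1 := ltn_ord y1.
case: (eqVneq (nat_of_ord y1) x1) => e1.
  have := @u_mono n A (n - y1 + y2) (n - x1 + x2); lia.
have -> : n - y1 + y2 = (n - x1 + x2).+1 by lia.
have := u_step A (n - x1 + x2); lia.
Qed.

Lemma diag_inj n (A B : {set 'I_(2 * n)}) : #|A| = n -> #|B| = n -> diag A = diag B -> A = B.
Proof.
have key : forall A B : {set 'I_(2 * n)}, #|A| = n -> #|B| = n -> diag A = diag B ->
    forall m, (m <= 2 * n)%N -> ~ (u A m < u B m)%N.
  move=> A' B' cA cB dAB m mle lt.
  have h1 := u_le_card B' m; have h2 := u_le_m B' mle; have h3 := u_lower cA mle.
  have r0 : (n - 1 - u A' m < n)%N by lia.
  have c0 : (m - 1 - u A' m < n)%N by lia.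
  have : (Ordinal r0, Ordinal c0) \in diag A'.
    rewrite mem_diag /=.
    have -> : n - (n - 1 - u A' m) + (m - 1 - u A' m) = m by lia.
    lia.
  rewrite dAB mem_diag /=.
  have -> : n - (n - 1 - u A' m) + (m - 1 - u A' m) = m by lia.
  lia.
move=> cA cB dAB.
have equ : forall m, (m <= 2 * n)%N -> u A m = u B m.
  move=> m mle; case: (ltngtP (u A m) (u B m)) => // lt.
    by case: (key A B cA cB dAB m mle lt).
  by case: (key B A cB cA (esym dAB) m mle lt).
apply/setP=> j.
have := u_succ A j; have := u_succ B j.
rewrite (equ j.+1 (ltn_ord j)) (equ j (ltnW (ltn_ord j))) => ->.
move/addnI; by case: (j \in A); case: (j \in B).
Qed.

Definition lam n (D : {set box n}) (r : 'I_n) := #|[set c : 'I_n | (r, c) \in D]|.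

Lemma rowP n (D : {set box n}) : dc D -> forall r c, ((r, c) \in D) = (c < lam D r)%N.
Proof.
move=> dcD r c; apply/idP/idP.
  move=> rc.
  have sub : [set c' : 'I_n | (c' < c.+1)%N] \subset [set c' : 'I_n | (r, c') \in D].
    apply/subsetP=> c'; rewrite !inE ltnS => le; exact: (dcD (r, c)).
  have := subset_leq_card sub; rewrite card_lt //.
apply: contraLR; rewrite -leqNgt => rc.
have sub : [set c' : 'I_n | (r, c') \in D] \subset [set c' : 'I_n | (c' < c)%N].
  apply/subsetP=> c'; rewrite !inE ltnNge => rc'; apply/negP => le.
  by move/negP: rc; apply; apply: (dcD (r, c')).
have := subset_leq_card sub; rewrite card_lt; last by apply: ltnW.
by rewrite -/(lam D r).

Qed.

Lemma lam_anti n (D : {set box n}) : dc D -> forall r r' : 'I_n, (r <= r')%N -> (lam D r' <= lam D r)%N.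
Proof.
move=> dcD r r' le; apply: subset_leq_card; apply/subsetP=> c; rewrite !inE => h.
exact: (dcD (r', c)).
Qed.

Lemma lam_le n (D : {set box n}) r : (lam D r <= n)%N.
Proof. by have := max_card [set c : 'I_n | (r, c) \in D]; rewrite card_ord. Qed.

Definition hv n (D : {set box n}) (k : 'I_n) := lam D (rev_ord k) + k.

Lemma hv_lt n (D : {set box n}) k : (hv D k < 2 * n)%N.
Proof. have := lam_le D (rev_ord k); have := ltn_ord k; rewrite /hv; lia. Qed.

Definition hb n (D : {set box n}) (k : 'I_n) : 'I_(2 * n) := Ordinal (hv_lt D k).

Definition build n (D : {set box n}) : {set 'I_(2 * n)} := hb D @: [set: 'I_n].

Lemma hv_mono n (D : {set box n}) : dc D -> forall k k' : 'I_n, (k <= k')%N -> (hv D k <= hv D k')%N.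
Proof.
move=> dcD k k' le; rewrite /hv.
have := @lam_anti n D dcD (rev_ord k') (rev_ord k); rewrite /= => h.
have := h (ltac:(have := ltn_ord k'; lia)); lia.
Qed.

Lemma hv_smono n (D : {set box n}) : dc D -> forall k k' : 'I_n, (k < k')%N -> (hv D k < hv D k')%N.
Proof.
move=> dcD k k' le; rewrite /hv.
have := @lam_anti n D dcD (rev_ord k') (rev_ord k); rewrite /= => h.
have := h (ltac:(have := ltn_ord k'; lia)); lia.
Qed.

Lemma hb_inj n (D : {set box n}) : dc D -> injective (hb D).
Proof.
move=> dcD k k' /(congr1 val) /= E; apply/val_inj.
case: (ltngtP k k') => // lt.
  by have := hv_smono dcD lt; rewrite E ltnn.
by have := hv_smono dcD lt; rewrite E ltnn.
Qed.

Lemma build_card n (D : {set box n}) : dc D -> #|build D| = n.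
Proof. by move=> dcD; rewrite card_imset ?cardsT ?card_ord //; apply: hb_inj. Qed.

Lemma u_build n (D : {set box n}) : dc D -> forall m, u (build D) m = #|[set k : 'I_n | (hv D k < m)%N]|.
Proof.
move=> dcD m; rewrite /u.
have -> : [set j in build D | (j < m)%N] = hb D @: [set k : 'I_n | (hv D k < m)%N].
  apply/setP=> j; rewrite inE; apply/andP/imsetP.
    by case=> /imsetP[k _ ->] /= lt; exists k; rewrite ?inE.
  by case=> k; rewrite inE => lt ->; split => //; apply: imset_f.
by rewrite card_imset //; apply: hb_inj.
Qed.

Lemma build_diag n (D : {set box n}) : dc D -> diag (build D) = D.
Proof.
move=> dcD; apply/setP=> -[r c]; rewrite mem_diag rowP // /= u_build //.
have hr : hv D (rev_ord r) = lam D r + (n - r.+1) by rewrite /hv rev_ordK.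
have or := ltn_ord r; have oc := ltn_ord c.
case: (ltnP c (lam D r)) => h.
  have sub : [set k : 'I_n | (hv D k < n - r + c)%N] \subset [set k : 'I_n | (k < n - r.+1)%N].
    apply/subsetP=> k; rewrite !inE => lt; rewrite ltnNge; apply/negP => le.
    have := @hv_mono n D dcD (rev_ord r) k le; rewrite hr; lia.
  have := subset_leq_card sub; rewrite card_lt; last by lia.
  move=> le; apply: leq_ltn_trans le _; lia.
have sub : [set k : 'I_n | (k < n - r)%N] \subset [set k : 'I_n | (hv D k < n - r + c)%N].
  apply/subsetP=> k; rewrite !inE => lt.
  have := @hv_mono n D dcD k (rev_ord r) (ltac:(simpl; lia)); rewrite hr; lia.
have := subset_leq_card sub; rewrite card_lt; last by lia.
by move=> le; rewrite ltnNge le.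
Qed.

Definition bt n (x : box n) : box n := (x.2, x.1).

Lemma btK n (x : box n) : bt (bt x) = x.
Proof. by case: x. Qed.

Lemma mem_tr n (S : {set box n}) x : (x \in tr S) = (bt x \in S).
Proof.
apply/imsetP/idP => [[y Hy ->]|H]; first by case: y Hy.
by exists (bt x) => //; case: x H.
Qed.

Definition good n (a b : {set box n}) :=
  dc a /\ dc b /\ (forall x, (bt x \in a) = (x \in a)) /\ (forall x, (bt x \in b) = (x \in b)) /\
      a \subset b /\ (forall x : box n, x \in b -> nat_of_ord x.1 = x.2 -> x \in a).

Lemma bt_diag n (x : box n) : nat_of_ord x.1 = x.2 -> bt x = x.
Proof. by case: x => x1 x2 /= E; congr pair; apply/val_inj. Qed.

Lemma good_of n (D : {set box n}) : dc D -> good (D :&: tr D) (D :|: tr D).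
Proof.
move=> dcD; split; [|split; [|split; [|split; [|split]]]].
- move=> x y; rewrite !inE !mem_tr => /andP[xD bxD] h1 h2.
  by rewrite (dcD x y) // (dcD (bt x) (bt y)).
- move=> x y; rewrite !inE !mem_tr => /orP[xD|bxD] h1 h2.
    by rewrite (dcD x y).
  by rewrite (dcD (bt x) (bt y)) ?orbT.
- by move=> x; rewrite !inE !mem_tr btK andbC.
- by move=> x; rewrite !inE !mem_tr btK orbC.
- by apply/subsetP=> x; rewrite !inE => /andP[->].
- by move=> x; rewrite !inE !mem_tr => + E; rewrite bt_diag // orbb andbb.
Qed.

Definition comp n (P : {set box n}) (x : box n) : {set box n} := [set y | connect (adj_in P) x y].

Lemma adjb_sym n : symmetric (@adjb n).
Proof.
move=> x y; rewrite /adjb (eq_sym x.1) (eq_sym x.2).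
by rewrite (orbC (x.2.+1 == y.2)) (orbC (x.1.+1 == y.1)).
Qed.

Lemma adj_sym n (P : {set box n}) : symmetric (adj_in P).
Proof. by move=> x y; rewrite /adj_in adjb_sym andbCA. Qed.

Lemma csym n (P : {set box n}) : connect_sym (adj_in P).
Proof. exact: sym_connect_sym (adj_sym P). Qed.

Lemma conn_in n (P : {set box n}) x y : connect (adj_in P) x y -> (x \in P) = (y \in P).
Proof.
move=> c; apply: (closed_connect (a:=P)) c.
by move=> u v /and3P[-> -> _].
Qed.

Lemma mem_comp n (P : {set box n}) x : x \in comp P x.
Proof. by rewrite inE connect0. Qed.

Lemma comp_in n (P : {set box n}) x : x \in P -> comp P x \in components P.
Proof. by move=> xP; apply: imset_f. Qed.

Lemma compP n (P : {set box n}) S x : S \in components P -> x \in S -> x \in P /\ S = comp P x.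
Proof.
case/imsetP=> x0 x0P -> ; rewrite inE => c.
split; first by rewrite -(conn_in c).
apply/setP=> y; rewrite !inE; exact: (same_connect (csym P) c).
Qed.

Lemma comp_adj n (P : {set box n}) x y : adj_in P x y -> comp P y = comp P x.
Proof.
move=> e; apply/setP=> z; rewrite !inE.
by apply: esym; apply: (same_connect (csym P)); apply: connect1.
Qed.

Lemma comp_conn n (P : {set box n}) x y : connect (adj_in P) x y -> comp P y = comp P x.
Proof.
move=> c; apply/setP=> z; rewrite !inE.
by apply: esym; apply: (same_connect (csym P)).
Qed.

Lemma mem_gamma n (a b : {set box n}) (I : {set {set box n}}) x :
  I \subset components (Pi_plus a b) ->
  (x \in gammaI a b I) = [|| x \in a,
      (bt x \in Pi_plus a b) && (comp (Pi_plus a b) (bt x) \notin I) |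
      (x \in Pi_plus a b) && (comp (Pi_plus a b) x \in I)].
Proof.
move=> IC; set P := Pi_plus a b; rewrite /gammaI !in_setU -orbA; congr (_ || (_ || _)).
- apply/idP/andP => [/bigcupP[S]|[bP nI]].
    rewrite inE => /andP[SI SC]; rewrite mem_tr => bS.
    by case: (compP SC bS) => bP E; rewrite -E.
  apply/bigcupP; exists (comp P (bt x)); first by rewrite inE nI comp_in.
  by rewrite mem_tr mem_comp.
- apply/idP/andP => [/bigcupP[S SI xS]|[xP CI]].
    have SC := subsetP IC S SI.
    by case: (compP SC xS) => bP E; rewrite -E.
  by apply/bigcupP; exists (comp P x) => //; rewrite mem_comp.
Qed.

Lemma inP n (a b : {set box n}) x : (x \in Pi_plus a b) = [&& x \in b, x \notin a & (x.1 < x.2)%N].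
Proof. by rewrite !inE; case: (x \in a); case: (x \in b). Qed.

Lemma btP n (a b : {set box n}) x : (bt x \in Pi_plus a b) = [&& bt x \in b, bt x \notin a & (x.2 < x.1)%N].
Proof. by rewrite inP. Qed.

Lemma adjb_of n (x y : box n) : (y.1 <= x.1)%N -> (y.2 <= x.2)%N -> (y.1 + y.2).+1 = x.1 + x.2 -> adjb x y.
Proof.
move=> h1 h2 E; rewrite /adjb.
have [e1|e1] : (nat_of_ord y.1 = x.1) \/ (nat_of_ord y.2 = x.2) by lia.
  have -> : x.1 == y.1 by apply/eqP/val_inj.
  have -> : (y.2.+1 == x.2) by apply/eqP; lia.
  by rewrite orbT.
have -> : x.2 == y.2 by apply/eqP/val_inj.
have -> : (y.1.+1 == x.1) by apply/eqP; lia.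
by rewrite !orbT.
Qed.

Lemma adjb_le n (u v : box n) : adjb u v ->
  ((v.1 <= u.1)%N /\ (v.2 <= u.2)%N) \/ ((u.1 <= v.1)%N /\ (u.2 <= v.2)%N).
Proof.
rewrite /adjb => /orP[/andP[/eqP e /orP[/eqP f|/eqP f]]|/andP[/eqP e /orP[/eqP f|/eqP f]]];
  rewrite ?e; lia.
Qed.

Lemma gamma_meet n (a b : {set box n}) (I : {set {set box n}}) x : good a b -> I \subset components (Pi_plus a b) ->
  (x \in gammaI a b I) && (bt x \in gammaI a b I) = (x \in a).
Proof.
case=> _ [_ [sa [sb [aSb dg]]]] IC.
rewrite !mem_gamma // btK btP inP sa sb /=.
case: (x \in a) => //=.
case: (x \in b); case: (comp (Pi_plus a b) x \in I); case: (comp (Pi_plus a b) (bt x) \in I);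
case: (ltngtP x.1 x.2) => //=.
Qed.

Lemma gamma_join n (a b : {set box n}) (I : {set {set box n}}) x : good a b -> I \subset components (Pi_plus a b) ->
  (x \in gammaI a b I) || (bt x \in gammaI a b I) = (x \in b).
Proof.
case=> _ [_ [sa [sb [aSb dg]]]] IC.
rewrite !mem_gamma // btK btP inP sa sb /=.
case: (boolP (x \in a)) => xa /=; first by rewrite (subsetP aSb).
case: (boolP (x \in b)) => xb //=.
case: (ltngtP x.1 x.2) => h /=; rewrite ?andbF ?orbF /=.
- by case: (comp (Pi_plus a b) x \in I).
- by case: (comp (Pi_plus a b) (bt x) \in I).
- by move: xa; rewrite (dg x xb h).
Qed.

Lemma gamma_dc n (a b : {set box n}) (I : {set {set box n}}) : good a b -> I \subset components (Pi_plus a b) ->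
  dc (gammaI a b I).
Proof.
move=> G IC; have G' := G; case: G' => dca [dcb [sa [sb [aSb dg]]]].
set P := Pi_plus a b.
apply: step_dc => -[x1 x2] [y1 y2] xg /= h1 h2 E.
set x := (x1, x2) in xg *; set y := (y1, y2).
have xb : x \in b by rewrite -(gamma_join x G IC) xg.
have yb : y \in b by apply: (dcb x).
case: (boolP (y \in a)) => ya; first by rewrite mem_gamma // ya.
have ny : nat_of_ord y1 <> y2 by move=> e; move: ya; rewrite (dg y yb e).
move: xg; rewrite !mem_gamma // => /or3P[xa|/andP[bP nI]|/andP[xP CI]].
- by move: ya; rewrite (dca x).
- have byP : bt y \in P.
    rewrite btP sb sa yb ya /=; move: bP; rewrite btP => /and3P[_ _] /=; lia.
  have e : adj_in P (bt x) (bt y) by rewrite /adj_in bP byP adjb_of //=; lia.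
  by rewrite byP (comp_adj e) nI orbT.
- have yP : y \in P.
    rewrite inP yb ya /=; move: xP; rewrite inP => /and3P[_ _] /=; lia.
  have e : adj_in P x y by rewrite /adj_in xP yP adjb_of.
  by rewrite yP (comp_adj e) CI !orbT.
Qed.

Lemma gamma_inj n (a b : {set box n}) (I J : {set {set box n}}) : good a b ->
  I \subset components (Pi_plus a b) -> J \subset components (Pi_plus a b) ->
  gammaI a b I = gammaI a b J -> I = J.
Proof.
move=> G.
suff H : forall I J : {set {set box n}}, I \subset components (Pi_plus a b) -> J \subset components (Pi_plus a b) ->
  gammaI a b I = gammaI a b J -> I \subset J.
  by move=> IC JC E; apply/eqP; rewrite eqEsubset (H I J) // (H J I).
move=> {}I {}J IC JC E; apply/subsetP => S SI.
have := subsetP IC S SI; case/imsetP => x0 x0P Sdef.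
change (S = comp (Pi_plus a b) x0) in Sdef.
have : x0 \in gammaI a b I by rewrite mem_gamma // x0P -Sdef SI !orbT.
rewrite E mem_gamma // => /or3P[|/andP[]|/andP[_]]; last by rewrite -Sdef.
- by move: x0P; rewrite inP => /and3P[_ /negbTE ->].
- by move: x0P; case: x0 {Sdef} => p q; rewrite inP btP /= => /and3P[_ _ l1] /and3P[_ _]; lia.
Qed.

Lemma gamma_NE_all n (a b : {set box n}) : good a b ->
  Northeast (gammaI a b (components (Pi_plus a b))).
Proof.
case=> _ [_ [sa _]].
apply/forallP => r; apply/forallP => c; apply/implyP => /andP[].
rewrite !mem_gamma // => /or3P[ra|/andP[bP /negP nC]|/andP[xP _]] cr.
- by rewrite -sa ra.
- by case: nC; rewrite comp_in.
- by move: xP; rewrite inP /= => /and3P[_ _]; lia.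
Qed.

Lemma gamma_NE n (a b : {set box n}) (I : {set {set box n}}) : good a b -> I \subset components (Pi_plus a b) ->
  Northeast (gammaI a b I) -> I = components (Pi_plus a b).
Proof.
move=> G IC NE; apply/eqP; rewrite eqEsubset IC /=; apply/subsetP => S SC.
case/imsetP: (SC) => x0 x0P Sdef.
change (S = comp (Pi_plus a b) x0) in Sdef; rewrite Sdef.
case: (boolP (comp (Pi_plus a b) x0 \in I)) => // nI.
have hb : (x0.2, x0.1) \in gammaI a b I.
  rewrite mem_gamma //; apply/or3P; apply: Or32; apply/andP; split.
    by case: x0 x0P {Sdef nI}.
  by case: x0 x0P {Sdef} nI.
have l : (x0.1 < x0.2)%N by move: x0P; rewrite inP => /and3P[].
move/forallP: NE => /(_ x0.2) /forallP /(_ x0.1) /implyP.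
rewrite hb l => /(_ isT).
have -> : (x0.1, x0.2) = x0 by case: x0 {x0P Sdef nI hb l}.
rewrite mem_gamma // (negbTE nI) andbF orbF => /orP[].
- by move: x0P; rewrite inP => /and3P[_ /negbTE ->].
- case/andP => bP _; move: bP l; case: x0 {x0P Sdef nI hb} => p q.
  by rewrite btP /= => /and3P[_ _]; lia.
Qed.

Lemma tr_gamma n (a b : {set box n}) (I : {set {set box n}}) : good a b ->
  I \subset components (Pi_plus a b) ->
  tr (gammaI a b I) = gammaI a b (components (Pi_plus a b) :\: I).
Proof.
case=> _ [_ [sa _]] IC; apply/setP => x.
rewrite mem_tr !mem_gamma ?subsetDl // btK sa !in_setD.
case: (boolP (x \in Pi_plus a b)) => xP; case: (boolP (bt x \in Pi_plus a b)) => bP;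
  rewrite /= ?comp_in //= ?andbT ?negbK ?orbF //;
  by case: (x \in a); case: (comp _ x \in I); case: (comp _ (bt x) \in I).
Qed.

Lemma gamma_SW n (a b : {set box n}) (I : {set {set box n}}) : good a b ->
  I \subset components (Pi_plus a b) -> Southwest (gammaI a b I) -> I = set0.
Proof.
move=> G IC; rewrite /Southwest tr_gamma // => /(gamma_NE G (subsetDl _ _)) E.
apply/setP => S; rewrite inE; apply/negP => SI.
have : S \in components (Pi_plus a b) :\: I by rewrite E (subsetP IC).
by rewrite inE SI.
Qed.

Lemma gamma_SW0 n (a b : {set box n}) : good a b -> Southwest (gammaI a b set0).
Proof.
move=> G; rewrite /Southwest tr_gamma ?sub0set // setD0; exact: gamma_NE_all.
Qed.

Lemma gamma_meet_set n (a b : {set box n}) (I : {set {set box n}}) : good a b ->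
  I \subset components (Pi_plus a b) -> gammaI a b I :&: tr (gammaI a b I) = a.
Proof. by move=> G IC; apply/setP => x; rewrite inE mem_tr gamma_meet. Qed.

Lemma gamma_join_set n (a b : {set box n}) (I : {set {set box n}}) : good a b ->
  I \subset components (Pi_plus a b) -> gammaI a b I :|: tr (gammaI a b I) = b.
Proof. by move=> G IC; apply/setP => x; rewrite inE mem_tr gamma_join. Qed.

Lemma fiber_gamma n (D : {set box n}) : dc D ->
  exists2 I : {set {set box n}}, I \subset components (Pi_plus (D :&: tr D) (D :|: tr D)) &
    D = gammaI (D :&: tr D) (D :|: tr D) I.
Proof.
move=> dcD; set a := D :&: tr D; set b := D :|: tr D; set P := Pi_plus a b.
have G : good a b by apply: good_of.
set I := [set S in components P | S \subset D].
have IC : I \subset components P by apply/subsetP => S; rewrite inE => /andP[].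
exists I => //.
have cl : forall u v, adj_in P u v -> u \in D -> v \in D.
  move=> u v /and3P[uP vP uv] uD.
  case: (boolP (v \in D)) => // vD.
  move: uP vP; rewrite !inP !inE !mem_tr uD (negbTE vD) /=  => /andP[buD _] /andP[bvD _].
  case: (adjb_le uv) => -[l1 l2].
    by move: vD; rewrite (dcD u v).
  by move: buD; rewrite (dcD (bt v) (bt u)).
have key : forall x, x \in P -> (comp P x \subset D) = (x \in D).
  move=> x xP; apply/idP/idP; first by move/subsetP; apply; rewrite mem_comp.
  move=> xD; apply/subsetP => y; rewrite inE => c.
  by rewrite -(closed_connect (intro_closed (csym P) cl) c).
have e1 : forall x, (x \in P) && (comp P x \in I) = (x \in P) && (x \in D).
  move=> x; case: (boolP (x \in P)) => //= xP; by rewrite inE comp_in //= key.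
apply/setP => x; rewrite mem_gamma // e1.
have e2 : (bt x \in P) && (comp P (bt x) \notin I) = (bt x \in P) && (bt x \notin D).
  by case: (boolP (bt x \in P)) => //= bP; rewrite inE comp_in //= key.
rewrite e2 btP inP !inE !mem_tr btK /=.
case: (ltngtP x.1 x.2) => h; last rewrite bt_diag //;
  by case: (x \in D); case: (bt x \in D).
Qed.
Unset Implicit Arguments.

Theorem proposition2p10 (n : nat) (a b : {set box n}) :
  (0 < n)%N ->
  (exists g0 : {set 'I_(2 * n)}, #|g0| = n /\ pi_n g0 = (a, b)) ->
  exists f : {set {set box n}} -> {set 'I_(2 * n)},
    [/\ forall I : {set {set box n}}, I \subset components (Pi_plus a b) -> diag (f I) = gammaI a b I,
        {in powerset (components (Pi_plus a b)) &, injective f},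
        f @: powerset (components (Pi_plus a b)) = fiber a b,
        [set g in fiber a b | Northeast (diag g)] = [set f (components (Pi_plus a b))]
      & [set g in fiber a b | Southwest (diag g)] = [set f set0]].
Proof.
move=> _ [g0 [_ pg]].
have G : good a b by case: pg => <- <-; apply: good_of; apply: diag_dc.
set C := components (Pi_plus a b).
pose f I := build (gammaI a b I).
have fd : forall I : {set {set box n}}, I \subset C -> diag (f I) = gammaI a b I.
  by move=> I IC; rewrite build_diag //; apply: gamma_dc.
have fin : forall I : {set {set box n}}, I \subset C -> f I \in fiber a b.
  move=> I IC; rewrite inE build_card ?eqxx /=; last by apply: gamma_dc.
  by rewrite /pi_n fd // gamma_meet_set // gamma_join_set.
have fibP : forall g, g \in fiber a b -> exists2 I : {set {set box n}}, I \subset C & g = f I.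
  move=> g; rewrite inE => /andP[/eqP cg /eqP pg'].
  have [Ea Eb] : a = diag g :&: tr (diag g) /\ b = diag g :|: tr (diag g) by case: pg' => -> ->.
  have [I IC dI] := fiber_gamma (@diag_dc n g).
  rewrite -Ea -Eb in IC dI.
  exists I => //; apply: diag_inj => //; first by rewrite build_card //; apply: gamma_dc.
  by rewrite fd.
exists f; split.
- exact: fd.
- move=> I J; rewrite !powersetE => IC JC E.
  by apply: (gamma_inj G IC JC); rewrite -fd // -fd // E.
- apply/setP => g; apply/imsetP/idP.
    by case=> I; rewrite powersetE => IC ->; apply: fin.
  by case/fibP => I IC ->; exists I; rewrite ?powersetE.
- apply/setP => g; rewrite in_set1 in_set; apply/idP/eqP.
    case/andP => gf; case: (fibP g gf) => I IC ->; rewrite fd // => NE.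
    by rewrite (gamma_NE G IC NE).
  move=> ->; have := fin C (subxx _); rewrite inE => -> /=.
  by rewrite fd // gamma_NE_all.
- apply/setP => g; rewrite in_set1 in_set; apply/idP/eqP.
    case/andP => gf; case: (fibP g gf) => I IC ->; rewrite fd // => SW.
    by rewrite (gamma_SW G IC SW).
  move=> ->; have := fin set0 (sub0set _); rewrite inE => -> /=.
  by rewrite fd ?sub0set // gamma_SW0.
Qed.
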